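(* Fix a real number $x>1$. There is a function $g:[0,1)\to\mathbb{R}$ with $g(\epsilon)/\epsilon\to 0$ as $\epsilon\to 0^+$ such that the following holds. Let $0\le\epsilon<1$ and $y=1+\epsilon$, let $N\ge1$ and $n\ge1$ be integers, and let $\mathcal{S}_0,\dots,\mathcal{S}_{n-1}$ be nonempty sets of QPSK sequences of length $N$ such that, for every $0\le i\le n-1$: (a) $\mathrm{PEP}(\mathbf{s})\le x\,y^{2i}N$ for every $\mathbf{s}\in\mathcal{S}_i$; and (b) if $\mathbf{s}\in\mathcal{S}_i$ then $j^m\mathbf{s}\in\mathcal{S}_i$ for every $m\in\mathbb{Z}_4$. Let $\mathcal{A}$ be the set of all $2^{2n}$-QAM sequences associated with tuples $(\mathbf{s}_0,\dots,\mathbf{s}_{n-1})$ with $\mathbf{s}_i\in\mathcal{S}_i$. Then $$\mathrm{PMEPR}(\mathcal{A})<3x(1+2\epsilon)+g(\epsilon)\quad\text{and}\quad \mathrm{PMEPR}(\mathcal{A})<3xy^2+g(\epsilon).$$ (In the paper's notation: $\mathrm{PMEPR}(\mathcal{A})<3x(1+2\epsilon)+o(\epsilon)$ and $\mathrm{PMEPR}(\mathcal{A})<3xy^2+o(\epsilon)$.)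
   Context: Let $j=\sqrt{-1}$. Fix $T>0$ and reals $f_0,\Delta f$ with $T\Delta f$ a positive integer; set $f_k=f_0+k\Delta f$. For a complex sequence $\mathbf{a}=(a_0,\dots,a_{N-1})$ define $S_{\mathbf{a}}(t)=\sum_{k=0}^{N-1}a_ke^{2\pi j f_k t}$, $P_{\mathbf{a}}(t)=|S_{\mathbf{a}}(t)|^2$, and $\mathrm{PEP}(\mathbf{a})=\sup_{t\in[0,T]}P_{\mathbf{a}}(t)$. A QPSK sequence of length $N$ is a sequence $\mathbf{s}=(s_0,\dots,s_{N-1})$ with every $s_k\in\{1,j,-1,-j\}$; $j^m\mathbf{s}=(j^ms_0,\dots,j^ms_{N-1})$. The $2^{2n}$-QAM sequence associated with QPSK sequences $\mathbf{s}_0,\dots,\mathbf{s}_{n-1}$, $\mathbf{s}_i=(s_{i,0},\dots,s_{i,N-1})$, is $\mathbf{a}=(a_0,\dots,a_{N-1})$ with $a_k=\frac{\sqrt2}{2}e^{\pi j/4}\sum_{i=0}^{n-1}2^{n-1-i}s_{i,k}$. The mean envelope power of $\mathcal{A}$ is $P_{av}(\mathcal{A})=\mathbb{E}\big[\frac1T\int_0^TP_{\mathbf{a}}(t)\,dt\big]=\mathbb{E}\|\mathbf{a}\|^2$, where the expectation is over $\mathbf{a}$ associated with $(\mathbf{s}_0,\dots,\mathbf{s}_{n-1})$ chosen uniformly at random from $\mathcal{S}_0\times\cdots\times\mathcal{S}_{n-1}$ (each $\mathbf{s}_i$ uniform in $\mathcal{S}_i$, independently). The peak-to-mean envelope power ratio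 is $\mathrm{PMEPR}(\mathcal{A})=\max_{\mathbf{a}\in\mathcal{A}}\mathrm{PEP}(\mathbf{a})/P_{av}(\mathcal{A})$. *)

(* Defs.v *)
From HB Require Import structures.
From mathcomp Require Import all_boot all_order all_algebra.
From mathcomp Require Import all_classical all_reals all_analysis.
From mathcomp Require Import complex.
Set Implicit Arguments. Unset Strict Implicit. Unset Printing Implicit Defensive.
Import Order.TTheory GRing.Theory Num.Theory ComplexField Normc.
Local Open Scope ring_scope.
Local Open Scope complex_scope.

Section Defs.
Variable R : realType.

Definition cexpj (th : R) : R[i] := (cos th) +i* (sin th).

Definition qpsk (m : 'I_4) : R[i] := 'i ^+ (nat_of_ord m).

(* QPSK sequences of length N, represented by their Z_4 exponent vectors *)
Definition qpsk_seq (N : nat) := {ffun 'I_N -> 'I_4}.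

Definition qrot (N : nat) (m : 'I_4) (s : qpsk_seq N) : qpsk_seq N :=
  [ffun k => s k + m].

Definition qpsk_cplx (N : nat) (s : qpsk_seq N) : 'I_N -> R[i] :=
  fun k => qpsk (s k).

Definition Ssig (f0 df : R) (N : nat) (a : 'I_N -> R[i]) (t : R) : R[i] :=
  \sum_(k < N) a k * cexpj (2 * pi * (f0 + k%:R * df) * t).

Definition Penv (f0 df : R) (N : nat) (a : 'I_N -> R[i]) (t : R) : R :=
  (normc (Ssig f0 df a t)) ^+ 2.

Definition PEP (T f0 df : R) (N : nat) (a : 'I_N -> R[i]) : R :=
  sup [set Penv f0 df a t | t in `[0, T]%classic].

Definition qam (n N : nat) (ss : {ffun 'I_n -> qpsk_seq N}) : 'I_N -> R[i] :=
  fun k => ((Num.sqrt 2 / 2) +i* 0) * cexpj (pi / 4) *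
           \sum_(i < n) (2 ^+ (n.-1 - i))%:C * qpsk (ss i k).

Definition sqnorm (N : nat) (a : 'I_N -> R[i]) : R :=
  \sum_(k < N) (normc (a k)) ^+ 2.

Definition tuples (n N : nat) (S : 'I_n -> {set qpsk_seq N})
  : {set {ffun 'I_n -> qpsk_seq N}} :=
  [set ss : {ffun 'I_n -> qpsk_seq N} | [forall i, ss i \in S i]].

Definition Pav (n N : nat) (S : 'I_n -> {set qpsk_seq N}) : R :=
  (\sum_(ss in tuples S) sqnorm (qam ss)) / (#|tuples S|)%:R.

Definition PMEPR (T f0 df : R) (n N : nat) (S : 'I_n -> {set qpsk_seq N}) : R :=
  (\big[Num.max/0]_(ss in tuples S) PEP T f0 df (qam ss)) / Pav S.

End Defs.

(* Main.v *)
Set Warnings "-all".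
Require Import Defs.
From HB Require Import structures.
From mathcomp Require Import all_boot all_order all_algebra.
From mathcomp Require Import all_classical all_reals all_analysis.
From mathcomp Require Import complex.
Import Order.TTheory GRing.Theory Num.Theory numFieldNormedType.Exports.
Local Open Scope classical_set_scope.
Local Open Scope ring_scope.
From mathcomp Require Import ring lra.
Import ComplexField Normc.

Section Helpers.
Variable R : realType.
Local Open Scope complex_scope.

Lemma normc_ge0 (z : R[i]) : 0 <= normc z.
Proof. by case: z => a b /=; exact: sqrtr_ge0. Qed.

Lemma normc_sqr (a b : R) : normc (a +i* b) ^+ 2 = a ^+ 2 + b ^+ 2.
Proof. by rewrite /= sqr_sqrtr // addr_ge0 // sqr_ge0. Qed.

Lemma normc_sqrC (z : R[i]) : (normc z ^+ 2)%:C = z * z^*.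
Proof.
case: z => a b; rewrite normc_sqr /=.
apply/eqP; rewrite eq_complex /=; apply/andP; split; apply/eqP; ring.
Qed.

Lemma normc_real (a : R) : 0 <= a -> normc (a +i* 0) = a.
Proof. by move=> a0 /=; rewrite expr0n /= addr0 sqrtr_sqr ger0_norm. Qed.

Lemma normc_sum (I : Type) (r : seq I) (P : pred I) (F : I -> R[i]) :
  normc (\sum_(i <- r | P i) F i) <= \sum_(i <- r | P i) normc (F i).
Proof.
elim/big_rec2: _ => [|i a b _ Hab]; first by rewrite normc0.
apply: le_trans (le_normcD _ _) _; exact: lerD.
Qed.

Lemma normc_exp (z : R[i]) m : normc (z ^+ m) = normc z ^+ m.
Proof. by elim: m => [|m IH]; rewrite ?expr0 ?normc1 // !exprS normcM IH. Qed.

Lemma normc_qpsk m : normc (qpsk R m) = 1.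
Proof.
rewrite /qpsk normc_exp.
have -> : normc ('i : R[i]) = 1 by rewrite /= expr0n expr1n add0r sqrtr1.
by rewrite expr1n.
Qed.

Lemma normc_cexpj (th : R) : normc (cexpj th) = 1.
Proof. by rewrite /cexpj /= cos2Dsin2 sqrtr1. Qed.


Lemma Ssig_bound (f0 df t : R) N (s : qpsk_seq N) :
  normc (Ssig f0 df (qpsk_cplx R s) t) <= N%:R.
Proof.
rewrite /Ssig; apply: le_trans (normc_sum _ _ _ _) _.
rewrite (eq_bigr (fun _ => 1)) ?sumr_const ?card_ord //.
by move=> k _; rewrite normcM normc_qpsk normc_cexpj mulr1.
Qed.

Lemma Penv_le_PEP (T f0 df : R) N (a : 'I_N -> R[i]) M t :
  (forall t, normc (Ssig f0 df a t) <= M) -> 0 <= t <= T ->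
  Penv f0 df a t <= PEP T f0 df a.
Proof.
move=> HM Ht; rewrite /PEP; apply: ub_le_sup; last first.
  by exists t => //; rewrite /= in_itv /= Ht.
exists (M ^+ 2) => _ [u _ <-]; rewrite /Penv !expr2 ler_pM ?normc_ge0 //.
Qed.

Definition Kq : R[i] := ((Num.sqrt 2 / 2) +i* 0) * cexpj (pi / 4).

Lemma normc_Kq : normc Kq = Num.sqrt 2 / 2.
Proof.
by rewrite /Kq normcM normc_cexpj mulr1 normc_real // divr_ge0 ?sqrtr_ge0.
Qed.

Lemma Ssig_qam n N (ss : {ffun 'I_n -> qpsk_seq N}) (f0 df t : R) :
  Ssig f0 df (qam R ss) t =
  Kq * \sum_(i < n) (2 ^+ (n.-1 - i))%:C * Ssig f0 df (qpsk_cplx R (ss i)) t.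
Proof.
rewrite /Ssig /qam /qpsk_cplx -/Kq.
rewrite big_distrr /=.
under [RHS]eq_bigr do rewrite big_distrr big_distrr /=.
rewrite exchange_big /=.
apply: eq_bigr => k _.
rewrite -(mulrA Kq) big_distrl big_distrr /=.
by apply: eq_bigr => i _; rewrite !mulrA.
Qed.


Lemma normc_Ssig_qam n N (ss : {ffun 'I_n -> qpsk_seq N}) (f0 df t y r : R) :
  0 <= y -> 0 <= r ->
  (forall i : 'I_n, normc (Ssig f0 df (qpsk_cplx R (ss i)) t) <= y ^+ i * r) ->
  normc (Ssig f0 df (qam R ss) t) <=
    Num.sqrt 2 / 2 * (\sum_(i < n) 2 ^+ (n.-1 - i) * y ^+ i) * r.
Proof.
move=> y0 r0 H; rewrite Ssig_qam normcM normc_Kq -[X in _ <= X]mulrA; apply: ler_wpM2l; first by rewrite divr_ge0 ?sqrtr_ge0.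
apply: le_trans (normc_sum _ _ _ _) _.
rewrite big_distrl /=; apply: ler_sum => i _.
rewrite normcM -complexr0 normc_real ?exprn_ge0 // -mulrA ler_wpM2l ?exprn_ge0 //.
Qed.

Definition o1 : 'I_4 := @Ordinal 4 1 isT.
Definition o3 : 'I_4 := @Ordinal 4 3 isT.

Lemma qrotK N (s : qpsk_seq N) : qrot o3 (qrot o1 s) = s.
Proof.
apply/ffunP => k; rewrite !ffunE -addrA.
have -> : o1 + o3 = 0 by apply/val_inj.
by rewrite addr0.
Qed.

Lemma i4 : ('i : R[i]) ^+ 4 = 1.
Proof. by rewrite -[4%N]/(2 * 2)%N exprM sqr_i sqrrN expr1n. Qed.

Lemma qpsk_o1 (a : 'I_4) : qpsk R (a + o1) = 'i * qpsk R a.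
Proof.
rewrite /qpsk.
have -> : nat_of_ord (a + o1) = ((a + 1) %% 4)%N by [].
by rewrite (expr_mod _ i4) addn1 exprS.
Qed.

Lemma qpsk_conj (a : 'I_4) : qpsk R a * (qpsk R a)^* = 1.
Proof.
rewrite /qpsk rmorphXn /= -exprMn.
have -> : ('i : R[i]) * 'i^* = 1.
  by apply/eqP; rewrite eq_complex /=; apply/andP; split; apply/eqP; ring.
by rewrite expr1n.
Qed.

Definition hrot n N (i : 'I_n) (ss : {ffun 'I_n -> qpsk_seq N}) :
  {ffun 'I_n -> qpsk_seq N} :=
  [ffun l => if l == i then qrot o1 (ss l) else ss l].
Arguments hrot {n N}.

Lemma hrot_inj n N (i : 'I_n) : injective (@hrot n N i).
Proof.
move=> s1 s2 /ffunP H; apply/ffunP => l; have := H l; rewrite !ffunE.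
case: eqP => _ // E.
by rewrite -(qrotK _ (s1 l)) E qrotK.
Qed.

Lemma hrot_tuples n N (S : 'I_n -> {set qpsk_seq N}) (i : 'I_n) ss :
  (forall (i : 'I_n) (s : qpsk_seq N) (m : 'I_4), s \in S i -> qrot m s \in S i) ->
  (hrot i ss \in tuples S) = (ss \in tuples S).
Proof.
move=> Hrot; rewrite !inE; apply/forallP/forallP => H l; have := H l.
  rewrite ffunE; case: eqP => [->|_] //.
  by move=> /(Hrot _ _ o3); rewrite qrotK.
rewrite ffunE; case: eqP => [->|_] //.
exact: Hrot.
Qed.

Lemma cross n N (S : 'I_n -> {set qpsk_seq N}) (i l : 'I_n) (k : 'I_N) :
  (forall (i : 'I_n) (s : qpsk_seq N) (m : 'I_4), s \in S i -> qrot m s \in S i) ->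
  i != l ->
  \sum_(ss in tuples S) qpsk R (ss i k) * (qpsk R (ss l k))^* = 0.
Proof.
move=> Hrot il.
set X := (X in X = 0).
have HX : X = 'i * X.
  rewrite {1}/X (reindex_inj (@hrot_inj n N i)) /= /X big_distrr /=.
  apply: eq_big => ss; first exact: hrot_tuples.
  move=> _; rewrite !ffunE eqxx eq_sym (negbTE il) ffunE qpsk_o1 mulrA //.
move/eqP: HX; rewrite -subr_eq0 -{1}[X]mul1r -mulrBl mulf_eq0 => /orP[|/eqP//].
by rewrite subr_eq0 eq_complex /= oner_eq0.
Qed.


Lemma sum_w n N (S : 'I_n -> {set qpsk_seq N}) (c : 'I_n -> R) (k : 'I_N) :
  (forall (i : 'I_n) (s : qpsk_seq N) (m : 'I_4), s \in S i -> qrot m s \in S i) ->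
  \sum_(ss in tuples S) normc (\sum_(i < n) (c i)%:C * qpsk R (ss i k)) ^+ 2
  = #|tuples S|%:R * \sum_(i < n) c i ^+ 2.
Proof.
move=> Hrot; apply: (@complexI R).
rewrite rmorph_sum /=.
under eq_bigr do rewrite normc_sqrC.
have E : forall ss : {ffun 'I_n -> qpsk_seq N},
  (\sum_(i < n) (c i)%:C * qpsk R (ss i k)) *
  (\sum_(i < n) (c i)%:C * qpsk R (ss i k))^* =
  \sum_(i < n) \sum_(l < n) (c i * c l)%:C * (qpsk R (ss i k) * (qpsk R (ss l k))^*).
  move=> ss; rewrite rmorph_sum big_distrl /=; apply: eq_bigr => i _.
  rewrite big_distrr /=; apply: eq_bigr => l _.
  have cr : forall a : R, a%:C^* = a%:C.
    by move=> a; apply/eqP; rewrite eq_complex /= oppr0 !eqxx.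
  rewrite rmorphM /=.
  move: (qpsk R (ss i k)) (qpsk R (ss l k)) => [a b] [a' b'].
  by apply/eqP; rewrite eq_complex /=; apply/andP; split; apply/eqP; ring.
under eq_bigr do rewrite E.
rewrite rmorphM rmorph_nat rmorph_sum mulr_sumr /= exchange_big /=.
apply: eq_bigr => i _; rewrite exchange_big /= (bigD1 i) //= [X in _ + X]big1 ?addr0.
  rewrite -big_distrr /=.
  under eq_bigr do rewrite qpsk_conj.
  by rewrite sumr_const mulrC expr2 rmorphM.
move=> l li; rewrite -big_distrr /= cross ?mulr0 //.
by rewrite eq_sym.
Qed.

Lemma Pav_eq n N (S : 'I_n -> {set qpsk_seq N}) :
  (forall (i : 'I_n) (s : qpsk_seq N) (m : 'I_4), s \in S i -> qrot m s \in S i) ->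
  (0 < #|tuples S|)%N ->
  Pav R S = N%:R * (\sum_(i < n) (2 ^+ (n.-1 - i)) ^+ 2) / 2.
Proof.
move=> Hrot card0.
rewrite /Pav /sqnorm exchange_big /=.
have E : forall k : 'I_N, \sum_(ss in tuples S) normc (qam R ss k) ^+ 2 =
   #|tuples S|%:R * (\sum_(i < n) (2 ^+ (n.-1 - i)) ^+ 2) / 2.
  move=> k.
  under eq_bigr do rewrite /qam -/Kq normcM normc_Kq exprMn.
  rewrite -big_distrr /= sum_w //.
  by rewrite expr_div_n sqr_sqrtr //; field.
under eq_bigr do rewrite E.
rewrite sumr_const card_ord.
have c0 : (#|tuples S|%:R : R) != 0 by rewrite pnatr_eq0 -lt0n.
rewrite -mulr_natl.
field.
by rewrite c0.
Qed.


Lemma geo1 (y : R) n :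
  (\sum_(i < n) 2 ^+ (n.-1 - i) * y ^+ i) * (2 - y) = 2 ^+ n - y ^+ n.
Proof.
elim: n => [|n IH]; first by rewrite big_ord0 mul0r !expr0 subrr.
rewrite big_ord_recl /= subn0 expr0 mulr1.
have -> : \sum_(i < n) 2 ^+ (n - (bump 0 i)) * y ^+ (bump 0 i) =
   y * \sum_(i < n) 2 ^+ (n.-1 - i) * y ^+ i.
  rewrite big_distrr /=; apply: eq_bigr => i _.
  by rewrite /bump /= add1n subnS predn_sub exprS mulrCA.
set s := \sum_(i < n) _.
have -> : (2 ^+ n + y * s) * (2 - y) = 2 ^+ n * (2 - y) + y * (s * (2 - y)) by ring.
rewrite IH !exprS; ring.
Qed.

Lemma geo2 n : 3 * \sum_(i < n) (2 ^+ (n.-1 - i)) ^+ 2 = 4 ^+ n - 1 :> R.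
Proof.
elim: n => [|n IH]; first by rewrite big_ord0 mulr0 expr0 subrr.
rewrite big_ord_recl /= subn0.
have -> : \sum_(i < n) (2 ^+ (n - (bump 0 i))) ^+ 2 =
   \sum_(i < n) (2 ^+ (n.-1 - i)) ^+ 2 :> R.
  by apply: eq_bigr => i _; rewrite /bump /= add1n subnS predn_sub.
have -> : (2 ^+ n) ^+ 2 = 4 ^+ n :> R.
  by rewrite -exprM mulnC exprM; congr (_ ^+ _); rewrite expr2; ring.
rewrite mulrDr IH exprS; ring.
Qed.


Lemma key (x e : R) n : 0 < x -> 0 <= e -> e < 1 -> (1 <= n)%N ->
  x * (\sum_(i < n) 2 ^+ (n.-1 - i) * (1 + e) ^+ i) ^+ 2 /
    (\sum_(i < n) (2 ^+ (n.-1 - i)) ^+ 2) < 3 * x / (1 - e) ^+ 2.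
Proof.
move=> x0 e0 e1 n1.
have h2n : 2 <= (2 : R) ^+ n.
  have H : forall m, (1 <= m)%N -> 2 <= (2 : R) ^+ m.
    by case=> // m _; rewrite exprS; apply: ler_peMr => //; apply: exprn_ege1; lra.
  exact: H.
set S := \sum_(i < n) _ * _.
set Q := \sum_(i < n) _ ^+ 2.
have hS : S * (1 - e) = 2 ^+ n - (1 + e) ^+ n.
  by rewrite -geo1; congr (_ * _); ring.
have hQ : 3 * Q = 4 ^+ n - 1 := geo2 n.
have h4 : (4 : R) ^+ n = (2 ^+ n) ^+ 2.
  by rewrite -exprM mulnC exprM; congr (_ ^+ _); rewrite expr2; ring.
have hb1 : 1 <= (1 + e) ^+ n by rewrite exprn_ege1 // lerDl.
have hb2 : (1 + e) ^+ n <= (2 : R) ^+ n.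
  by rewrite lerXn2r ?nnegrE ?addr_ge0 //; lra.
have key : (S * (1 - e)) ^+ 2 < 3 * Q.
  rewrite hS hQ h4.
  move: h2n hb1 hb2; set a := 2 ^+ n; set b := (1 + e) ^+ n => h2n hb1 hb2.
  nra.
have Q0 : 0 < Q by rewrite -(@pmulr_rgt0 _ 3) // hQ h4; nra.
have e10 : 1 - e != 0 by rewrite subr_eq0 gt_eqF.
rewrite -subr_gt0.
have -> : 3 * x / (1 - e) ^+ 2 - x * S ^+ 2 / Q =
   x * (3 * Q - (S * (1 - e)) ^+ 2) / (Q * (1 - e) ^+ 2).
  by field; rewrite e10 gt_eqF.
apply: divr_gt0; first by apply: mulr_gt0 => //; rewrite subr_gt0.
by rewrite mulr_gt0 // exprn_gt0 // subr_gt0.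
Qed.

End Helpers.

Lemma g_eq (R : realType) (x e : R) : 0 < e -> e < 1 ->
  3 * x * (e * (3 - 2 * e)) / ((1 - e) * (1 - e)) =
  (3 * x / (1 - e) ^+ 2 - 3 * x * (1 + 2 * e)) / e.
Proof.
move=> e0 e1.
have h1 : (1 - e) != 0 by rewrite subr_eq0 gt_eqF.
by field; rewrite h1 gt_eqF.
Qed.

Lemma lim_g (R : realType) (x : R) :
  (fun e => (3*x/(1-e)^+2 - 3*x*(1+2*e)) / e) @ 0^'+ --> 0.
Proof.
have H : (fun e : R => 3*x*(e*(3-2*e)) / ((1-e)*(1-e))) @ 0 --> 3*x*(0*(3-2*0))/((1-0)*(1-0)).
  apply: cvgM; last first.
    apply: cvgV; first by rewrite subr0 mulr1 oner_neq0.
    apply: cvgM; apply: cvgB; (exact: cvg_cst || exact: cvg_id).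
  apply: cvgM; first exact: cvg_cst.
  apply: cvgM; first exact: cvg_id.
  apply: cvgB; first exact: cvg_cst.
  apply: cvgM; [exact: cvg_cst| exact: cvg_id].
rewrite !mul0r mulr0 mul0r in H.
apply: cvg_trans (cvg_at_right_filter H).
apply: near_eq_cvg; near=> e.
have e0 : 0 < e by near: e; exact: nbhs_right_gt.
have e1 : e < 1 by near: e; exact: nbhs_right_lt.
have h1 : (1 - e) ^+ 2 != 0 by rewrite expf_neq0 // subr_eq0 gt_eqF.
exact: g_eq.
Unshelve. all: by end_near.
Qed.

Theorem corollary2 (R : realType) (T f0 df : R) (x : R) :
  0 < T -> (exists m : nat, (0 < m)%N /\ T * df = m%:R) -> 1 < x ->
  exists g : R -> R,
    ((fun e => g e / e) @ 0^'+ --> 0) /\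
    forall (eps : R) (N n : nat) (S : 'I_n -> {set qpsk_seq N}),
      0 <= eps -> eps < 1 -> (1 <= N)%N -> (1 <= n)%N ->
      (forall i, S i != finset.set0) ->
      (forall (i : 'I_n) (s : qpsk_seq N), s \in S i ->
         PEP T f0 df (qpsk_cplx R s) <= x * (1 + eps) ^+ (2 * i) * N%:R) ->
      (forall (i : 'I_n) (s : qpsk_seq N) (m : 'I_4), s \in S i -> qrot m s \in S i) ->
      PMEPR T f0 df S < 3 * x * (1 + 2 * eps) + g eps /\
      PMEPR T f0 df S < 3 * x * (1 + eps) ^+ 2 + g eps.
Proof.
move=> T0 _ x1.
exists (fun e => 3 * x / (1 - e) ^+ 2 - 3 * x * (1 + 2 * e)); split.
  exact: lim_g.
move=> eps N n S e0 e1 N1 n1 Sne Hpep Hrot.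
have x0 : 0 < x by apply: lt_trans x1.
have card0 : (0 < #|tuples S|)%N.
  pose ss0 : {ffun 'I_n -> qpsk_seq N} :=
    [ffun i => odflt [ffun _ => ord0] [pick s in S i]].
  apply/card_gt0P; exists ss0; rewrite inE; apply/forallP => i; rewrite ffunE.
  case: pickP => //= H; have/set0Pn [s hs] := Sne i.
  by rewrite H in hs.
have HPav := @Pav_eq R n N S Hrot card0.
set Sy := \sum_(i < n) 2 ^+ (n.-1 - i) * (1 + eps) ^+ i.
set Q := \sum_(i < n) (2 ^+ (n.-1 - i)) ^+ 2 : R.
set r := Num.sqrt (x * N%:R).
have r0 : 0 <= r by exact: sqrtr_ge0.
have y0 : 0 <= 1 + eps by lra.
have HB : forall ss, ss \in tuples S ->
    PEP T f0 df (qam R ss) <= (Num.sqrt 2 / 2 * Sy * r) ^+ 2.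
  move=> ss hss; apply: ge_sup.
    exists (Penv f0 df (qam R ss) 0); exists 0 => //.
    by rewrite /= in_itv /= lexx ltW.
  move=> _ [t ht <-]; rewrite /Penv.
  have ht' : 0 <= t <= T by move: ht; rewrite /= in_itv.
  have Hi : forall i : 'I_n,
      normc (Ssig f0 df (qpsk_cplx R (ss i)) t) <= (1 + eps) ^+ i * r.
    move=> i.
    have hi : ss i \in S i by move: hss; rewrite inE => /forallP.
    have := le_trans (@Penv_le_PEP R T f0 df N _ _ t (fun t => @Ssig_bound R f0 df t N (ss i)) ht')
                     (Hpep i _ hi).
    have -> : x * (1 + eps) ^+ (2 * i) * N%:R = ((1 + eps) ^+ i * r) ^+ 2.
      rewrite exprMn sqr_sqrtr ?mulr_ge0 ?ler0n ?ltW // -exprM mulnC.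
      by rewrite mulrCA mulrA.
    rewrite /Penv => Hsq.
    have u0 := @normc_ge0 R (Ssig f0 df (qpsk_cplx R (ss i)) t).
    have v0 : 0 <= (1 + eps) ^+ i * r by rewrite mulr_ge0 ?exprn_ge0.
    nra.
  have := @normc_Ssig_qam R n N ss f0 df t _ _ y0 r0 Hi; rewrite -/Sy => Hn.
  have u0 := @normc_ge0 R (Ssig f0 df (qam R ss) t).
  by rewrite !expr2 ler_pM.
have B0 : 0 <= (Num.sqrt 2 / 2 * Sy * r) ^+ 2 by exact: sqr_ge0.
have HM : \big[Num.max/0]_(ss in tuples S) PEP T f0 df (qam R ss)
          <= (Num.sqrt 2 / 2 * Sy * r) ^+ 2.
  elim/big_ind: _ => //.
    by move=> a b ha hb; rewrite ge_max ha hb.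
have Q0 : 0 < Q.
  have := geo2 R n; rewrite -/Q => hQ.
  have H4 : forall m, (1 <= m)%N -> 1 < (4 : R) ^+ m.
    case=> // m _; rewrite exprS.
    have : 1 <= (4 : R) ^+ m by apply: exprn_ege1; lra.
    move=> h; nra.
  have := H4 n n1; lra.
have N0 : 0 < (N%:R : R) by rewrite ltr0n.
have Hlt : PMEPR T f0 df S < 3 * x / (1 - eps) ^+ 2.
  rewrite /PMEPR HPav -/Q.
  apply: le_lt_trans (@key R x eps n x0 e0 e1 n1).
  rewrite -/Sy -/Q.
  have -> : x * Sy ^+ 2 / Q = (Num.sqrt 2 / 2 * Sy * r) ^+ 2 / (N%:R * Q / 2).
    rewrite /r !exprMn !sqr_sqrtr ?mulr_ge0 ?ler0n ?ltW //.
    by field; rewrite !gt_eqF.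
  apply: ler_wpM2r => //.
  by rewrite invr_ge0 divr_ge0 ?mulr_ge0 ?ltW.
split.
  by rewrite addrC subrK.
apply: (lt_le_trans Hlt).
rewrite -subr_ge0.
have -> : 3 * x * (1 + eps) ^+ 2 +
    (3 * x / (1 - eps) ^+ 2 - 3 * x * (1 + 2 * eps)) - 3 * x / (1 - eps) ^+ 2
    = 3 * x * eps ^+ 2 by ring.
by rewrite mulr_ge0 ?sqr_ge0 // mulr_ge0 // ltW.
Qed.
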